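(* Let $T$ be a tree on vertex set $\{1,\dots,n\}$, $n\ge2$, let $k\ge2$, and let $M$ be the order-$k$ Steiner distance hypermatrix of $T$. Let $Z$ be the zeta matrix of $T$ rooted at vertex $n$. Then for all $\mathbf{c}_1,\ldots,\mathbf{c}_k\in\mathbb{R}^n$: if $k$ is even, $$M(\mathbf{c}_1,\ldots,\mathbf{c}_k)=\big(U-2(\mathbb{I}^k_{n-1}\oplus[0])\big)(Z\mathbf{c}_1,\ldots,Z\mathbf{c}_k);$$ if $k$ is odd, $$M(\mathbf{c}_1,\ldots,\mathbf{c}_k)=U(Z\mathbf{c}_1,\ldots,Z\mathbf{c}_k).$$
   Context: For $U'\subseteq V(T)$, the Steiner distance $S(U')$ is the minimum number of edges of a connected subgraph of $T$ whose vertex set contains $U'$. The order-$k$ Steiner distance hypermatrix $M$ has entries $M_{(i_1,\dots,i_k)}=S(\{i_1,\dots,i_k\})$, and for any order-$k$, dimension-$n$ hypermatrix $H$, $H(\mathbf{x}_1,\dots,\mathbf{x}_k)=\sum_{\mathbf{i}\in[n]^k}H_{\mathbf{i}}\prod_{j=1}^k x_{j i_j}$. The zeta matrix $Z$ of $T$ rooted at $n$ is the $n\times n$ matrix with $Z_{xy}=1$ if $x$ lies on the unique path in $T$ from $y$ to $n$ (including the endpoints), and $Z_{xy}=0$ otherwise. $U$ is the order-$k$, dimension-$n$ hypermatrix whose $(i_1,\dots,i_k)$ entry equals $(-1)^{t-1}$ if there exist a vertex $w\in\{1,\dots,n-1\}$ and a set $S\subseteq\{1,\dots,k\}$ with $|S|=t$,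 $1\le t\le k-1$, such that $i_j=w$ for $j\in S$ and $i_j=n$ for $j\notin S$; and $0$ otherwise. $\mathbb{I}^k_{n-1}\oplus[0]$ is the order-$k$, dimension-$n$ hypermatrix whose $(i_1,\dots,i_k)$ entry is $1$ if $i_1=\dots=i_k\in\{1,\dots,n-1\}$ and $0$ otherwise. *)

(* Defs.v *)
From HB Require Import structures.
From mathcomp Require Import all_boot all_order all_algebra.
Set Implicit Arguments. Unset Strict Implicit. Unset Printing Implicit Defensive.
Import Order.TTheory GRing.Theory Num.Theory.
Local Open Scope ring_scope.

Definition edges (N : nat) (e : rel 'I_N) : {set {set 'I_N}} :=
  [set [set p.1; p.2] | p in [set p : 'I_N * 'I_N | e p.1 p.2]].

Definition is_tree (N : nat) (e : rel 'I_N) : Prop :=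
  symmetric e /\ irreflexive e /\ (forall x y, connect e x y) /\
  #|edges e| = N.-1.

Definition steiner_ok (N : nat) (e : rel 'I_N) (A : {set 'I_N})
    (p : {set 'I_N} * {set {set 'I_N}}) : bool :=
  [&& A \subset p.1, p.2 \subset edges e,
      [forall f in p.2, f \subset p.1] &
      [forall x in p.1, forall y in p.1,
         connect (fun a b => [set a; b] \in p.2) x y]].

(* Steiner distance: minimum number of edges of such a subgraph
   (the default N is never attained for a tree, which has N-1 edges). *)
Definition steiner (N : nat) (e : rel 'I_N) (A : {set 'I_N}) : nat :=
  \big[minn/N]_(p | steiner_ok e A p) #|p.2|.

Definition hypermatrix (R : Type) (k N : nat) := {ffun 'I_k -> 'I_N} -> R.

Definition hform (R : comNzRingType) (k N : nat) (H : hypermatrix R k N)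
    (x : 'I_k -> 'cV[R]_N) : R :=
  \sum_(i : {ffun 'I_k -> 'I_N}) H i * \prod_(j < k) x j (i j) 0.

Definition steiner_hm (R : comNzRingType) (k N : nat) (e : rel 'I_N)
  : hypermatrix R k N :=
  fun i => (steiner e [set i j | j : 'I_k])%:R.

Definition on_path (N : nat) (e : rel 'I_N) (x y r : 'I_N) : bool :=
  [exists m : 'I_N, exists t : m.-tuple 'I_N,
     [&& path e y t, last y t == r, uniq (y :: t) & x \in y :: t]].

Definition zeta (R : comNzRingType) (N : nat) (e : rel 'I_N) (r : 'I_N)
  : 'M[R]_N :=
  \matrix_(x, y) (on_path e x y r)%:R.

Definition U_cond (k N : nat) (r : 'I_N) (i : {ffun 'I_k -> 'I_N})
    (p : 'I_N * {set 'I_k}) : bool :=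
  [&& p.1 != r, (0 < #|p.2| < k)%N &
      [forall j, i j == (if j \in p.2 then p.1 else r)]].

Definition U_hm (R : comNzRingType) (k N : nat) (r : 'I_N) : hypermatrix R k N :=
  fun i => if [pick p | U_cond r i p] is Some p
           then (-1) ^+ (#|p.2|.-1) else 0.

(* I^k_{N-1} (+) [0] : diagonal identity except at the root. *)
Definition Idiag_hm (R : comNzRingType) (k N : nat) (r : 'I_N)
  : hypermatrix R k N :=
  fun i => if [exists w, (w != r) && [forall j, i j == w]] then 1 else 0.

Definition hm_sub (R : comNzRingType) (k N : nat) (A B : hypermatrix R k N)
  : hypermatrix R k N := fun i => A i - B i.
Definition hm_scale (R : comNzRingType) (k N : nat) (a : R) (A : hypermatrix R k N)
  : hypermatrix R k N := fun i => a * A i.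

Arguments steiner_hm R k {N} e _.
Arguments U_hm R k {N} r _.
Arguments Idiag_hm R k {N} r _.
Arguments zeta R {N} e r.

(* Main.v *)
Require Import Defs.
From mathcomp Require Import all_boot all_order all_algebra.
From mathcomp Require Import zify ring.
Set Implicit Arguments. Unset Strict Implicit. Unset Printing Implicit Defensive.
Import Order.TTheory GRing.Theory Num.Theory.


Lemma set2_eq (T : finType) (a b c d : T) : a != b -> [set a; b] = [set c; d] ->
  (a = c /\ b = d) \/ (a = d /\ b = c).
Proof.
move=> nab E.
have : a \in [set c; d] by rewrite -E set21.
have : b \in [set c; d] by rewrite -E set22.
rewrite !inE => /orP[]/eqP hb /orP[]/eqP ha.
- by rewrite ha hb eqxx in nab.
- by right.
- by left.
- by rewrite ha hb eqxx in nab.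
Qed.

Lemma path_cross (T : eqType) (R : rel T) (P : pred T) a s :
  path R a s -> P a -> ~~ P (last a s) -> exists x y, [/\ R x y, P x & ~~ P y].
Proof.
elim: s a => [|b s IH] a /=; first by move=> _ ->.
move=> /andP[hab hp] pa.
case pb: (P b); first by apply: IH.
by move=> _; exists a, b; rewrite pb.
Qed.

Lemma bigmin_le (I : eqType) (s : seq I) (P : pred I) (F : I -> nat) idx x :
  x \in s -> P x -> \big[minn/idx]_(i <- s | P i) F i <= F x.
Proof.
elim: s => // y s IH; rewrite inE big_cons => /orP[/eqP<-|xs] px.
  by rewrite px geq_minl.
by case: (P y); rewrite ?geq_min IH ?orbT.
Qed.

Section Tree.
Variables (N : nat) (e : rel 'I_N) (r : 'I_N).
Hypothesis hT : is_tree e.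

Definition pathto y m := [exists t : m.-tuple 'I_N, path e y t && (last y t == r)].
Definition depth y := find (pathto y) (iota 0 N).

Lemma pathto_ex y : exists2 m, m < N & pathto y m.
Proof.
have [_ [_ [hc _]]] := hT.
move/connectP: (hc y r) => [p hp hr].
move: hr; case: (shortenP hp) => p' hp' hu _ hr.
exists (size p').
  have := max_card (mem (y :: p')).
  by rewrite card_ord (card_uniqP hu).
by apply/existsP; exists (in_tuple p'); rewrite /= hp' hr eqxx.
Qed.

Lemma depth_lt y : depth y < N.
Proof.
have [m hm hp] := pathto_ex y.
rewrite /depth -[X in _ < X](size_iota 0 N) -has_find.
by apply/hasP; exists m; rewrite // mem_iota.
Qed.

Lemma depth_ok y : pathto y (depth y).
Proof.
have := nth_find 0 (a := pathto y) (s := iota 0 N).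
rewrite nth_iota ?depth_lt // add0n; apply.
have [m hm hp] := pathto_ex y.
by apply/hasP; exists m; rewrite // mem_iota.
Qed.

Lemma depth_min y m : pathto y m -> depth y <= m.
Proof.
move=> hp; rewrite leqNgt; apply/negP => hm.
have := before_find 0 hm.
by rewrite nth_iota ?add0n ?hp // (ltn_trans hm (depth_lt y)).
Qed.

Lemma depth_r : depth r = 0.
Proof.
apply/eqP; rewrite -leqn0; apply: depth_min.
by apply/existsP; exists [tuple]; rewrite /= eqxx.
Qed.

Lemma depth0 y : depth y = 0 -> y = r.
Proof.
move=> h; have := depth_ok y; rewrite h.
by case/existsP => t /andP[_]; rewrite tuple0 /= => /eqP.
Qed.

Lemma depth_down y : y != r -> exists2 z, e y z & depth z < depth y.
Proof.
move=> yr.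
have h : forall m, pathto y m -> 0 < m -> exists2 z, e y z & depth z < m.
  move=> m /existsP[[s0 hs] /= /andP[hp hl]]; move/eqP: hs.
  case: s0 hp hl => [|z s] hp hl hs; first by rewrite -hs.
  move=> _; move/andP: hp => [eyz hp]; exists z => //.
  rewrite -hs ltnS; apply: depth_min.
  by apply/existsP; exists (in_tuple s); apply/andP.
apply: h; first exact: depth_ok.
rewrite lt0n; apply/eqP => /depth0 hy; by rewrite hy eqxx in yr.
Qed.

Lemma depth_up y z : e y z -> depth y <= (depth z).+1.
Proof.
move=> eyz; have := depth_ok z; case/existsP => t /andP[hp hl].
apply: depth_min; apply/existsP; exists [tuple of z :: t].
by rewrite /= eyz hp hl.
Qed.

Definition par y := if [pick z | e y z && (depth z < depth y)] is Some z then z else y.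

Lemma par_r : par r = r.
Proof. by rewrite /par; case: pickP => // z /andP[_]; rewrite depth_r. Qed.

Lemma par_spec y : y != r -> e y (par y) /\ depth (par y) < depth y.
Proof.
move=> yr; rewrite /par; case: pickP => [z /andP[]|] //.
move=> H; have [z ez dz] := depth_down yr.
by have := H z; rewrite ez dz.
Qed.

Lemma depth_par y : depth (par y) = (depth y).-1.
Proof.
have [->|yr] := eqVneq y r; first by rewrite par_r depth_r.
have [h1 h2] := par_spec yr.
have := depth_up h1; move: h2; case: (depth y) => // d; rewrite ltnS => a b.
by apply/eqP; rewrite eqn_leq a -ltnS b.
Qed.

Lemma depth_iter j y : depth (iter j par y) = depth y - j.
Proof. by elim: j => [|j IH]; rewrite ?subn0 // iterS depth_par IH subnS. Qed.

Lemma iter_r j y : depth y <= j -> iter j par y = r.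
Proof. by move=> h; apply: depth0; rewrite depth_iter; apply/eqP; rewrite subn_eq0. Qed.

Lemma par_inj v w : v != r -> w != r -> [set v; par v] = [set w; par w] -> v = w.
Proof.
move=> vr wr E.
have vn : v != par v by apply/eqP => h; have := (par_spec vr).2; rewrite -h ltnn.
case: (set2_eq vn E) => [[]//|[h1 h2]].
have := (par_spec vr).2; have := (par_spec wr).2; rewrite -h1 h2.
by move=> a b; have := ltn_trans a b; rewrite ltnn.
Qed.

Lemma edge_case a b : e a b -> (a != r /\ b = par a) \/ (b != r /\ a = par b).
Proof.
move=> eab; have [sym [irr [_ hcard]]] := hT.
set Im := [set [set v; par v] | v in [set~ r]].
have sub : Im \subset edges e.
  apply/subsetP => _ /imsetP[v hv ->]; apply/imsetP; exists (v, par v) => //.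
  by rewrite inE /=; apply: (par_spec _).1; rewrite !inE in hv.
have eqI : Im = edges e.
  apply/eqP; rewrite eqEcard sub /= hcard /Im card_in_imset ?cardsC1 ?card_ord //.
  by move=> v w; rewrite !inE; apply: par_inj.
have : [set a; b] \in edges e by apply/imsetP; exists (a, b); rewrite ?inE.
rewrite -eqI => /imsetP[u hu heq]; rewrite !inE in hu.
have ab : a != b by apply/eqP => h; rewrite h irr in eab.
case: (set2_eq ab heq) => [[-> ->]|[-> ->]]; first by left.
by right.
Qed.

Lemma chain s y : path e y s -> last y s = r -> uniq (y :: s) ->
  s = traject par (par y) (size s).
Proof.
elim: s y => [|z s IH] y //=.
move=> /andP[eyz hp] hl /andP[ny hu].
have hs := IH z hp hl hu.
case: (edge_case eyz) => [[_ zp]|[zr yp]].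
  by rewrite /= -zp -hs.
case: s hs hl ny hu {IH hp} => [|w s'] hs hl ny hu.
  by rewrite /= in hl; rewrite hl eqxx in zr.
move: hs => /= -[hw _].
by rewrite !inE hw -yp eqxx !orbT in ny.
Qed.

Lemma path_par d y : d <= depth y -> path e y (traject par (par y) d).
Proof.
elim: d y => [|d IH] y hd //=.
have yr : y != r by apply/eqP => h; rewrite h depth_r in hd.
rewrite (par_spec yr).1 /=; apply: IH.
by rewrite depth_par -ltnS (ltn_predK hd).
Qed.

Lemma uniq_par d y : d <= depth y -> uniq (traject par y d.+1).
Proof.
elim: d y => [|d IH] y hd //.
rewrite trajectS cons_uniq IH ?andbT; last first.
  by rewrite depth_par -ltnS (ltn_predK hd).
apply/trajectP => -[i _ hi].
have h := depth_iter i (par y); rewrite -hi depth_par in h.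
have : (depth y).-1 - i < depth y.
  by move: hd; case: (depth y) => // m _; rewrite ltnS leq_subr.
by rewrite -h ltnn.
Qed.

Lemma onpP x y : reflect (exists j, iter j par y = x) (on_path e x y r).
Proof.
apply: (iffP existsP).
  move=> [m /existsP[t /and4P[hp hl hu hx]]].
  have hc := chain hp (eqP hl) hu.
  by move: hx; rewrite hc -trajectS => /trajectP[i _ ->]; exists i.
move=> [j hj]; exists (Ordinal (depth_lt y)); apply/existsP.
exists (Tuple (introT eqP (size_traject par (par y) (depth y)))).
apply/and4P; split => /=.
- exact: path_par.
- by rewrite last_traject iter_r.
- by have := uniq_par (leqnn (depth y)).

change (x \in traject par y (depth y).+1); apply/trajectP.
have [hjd|hjd] := leqP j (depth y).
  by exists j; rewrite // ltnS.
by exists (depth y); rewrite // -hj !iter_r // ltnW.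
Qed.


Definition anc x y := exists j, iter j par y = x.

Lemma anc_refl x : anc x x. Proof. by exists 0. Qed.
Lemma anc_r y : anc r y. Proof. by exists (depth y); rewrite iter_r. Qed.
Lemma anc_par y : anc (par y) y. Proof. by exists 1. Qed.
Lemma anc_trans x y z : anc x y -> anc y z -> anc x z.
Proof. by move=> [i <-] [j <-]; exists (i + j); rewrite iterD. Qed.
Lemma anc_cmp x y a : anc x a -> anc y a -> anc x y \/ anc y x.
Proof.
move=> [i <-] [j <-]; have [hij|hij] := leqP i j.
  by right; exists (j - i); rewrite -iterD subnK.
by left; exists (i - j); rewrite -iterD subnK // ltnW.
Qed.
Lemma anc_antisym x y : anc x y -> anc y x -> x = y.
Proof.
move=> [i hi] [j hj].
case: i hi => [|i] hi; first by [].
have d1 := depth_iter i.+1 y; rewrite hi in d1.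
have d2 := depth_iter j x; rewrite hj in d2.
have hy0 : depth y = 0 by lia.
by rewrite -hi iter_r ?hy0 //; symmetry; exact: depth0.
Qed.
Lemma anc_step v u : anc v u -> v = u \/ anc v (par u).
Proof. move=> [[|j] <-]; first by left. by right; exists j; rewrite iterSr. Qed.


Definition onp x y := on_path e x y r.
Lemma onpE x y : onp x y <-> anc x y.
Proof. by split => /onpP. Qed.

Definition cut (A : {set 'I_N}) v := [exists a in A, onp v a] && [exists a in A, ~~ onp v a].
Definition Cset A := [set v | (v != r) && cut A v].
Definition F0 A := [set [set v; par v] | v in Cset A].
Definition W A := A :|: Cset A :|: [set par v | v in Cset A].

Lemma card_F0 A : #|F0 A| = #|Cset A|.
Proof.
apply: card_in_imset => v w; rewrite !inE => /andP[vr _] /andP[wr _].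
exact: par_inj.
Qed.

Lemma edge2 x y : [set x; y] \in edges e -> x != y ->
  exists u, u != r /\ ((x = u /\ y = par u) \/ (x = par u /\ y = u)).
Proof.
case/imsetP => [[a b]]; rewrite inE /= => eab heq xy.
case: (set2_eq xy heq) => [[-> ->]|[-> ->]]; case: (edge_case eab) => [[ar ->]|[br ->]].
- by exists a; split => //; left.
- by exists b; split => //; right.
- by exists a; split => //; right.
- by exists b; split => //; left.
Qed.

Lemma F0_sub A p : steiner_ok e A p -> F0 A \subset p.2.
Proof.
case/and4P => hA hF hsub hconn.
apply/subsetP => _ /imsetP[v hv ->].
move: hv; rewrite inE => /andP[vr /andP[/existsP[a /andP[aA va]] /existsP[b /andP[bA vb]]]].
have aW : a \in p.1 := subsetP hA a aA.
have bW : b \in p.1 := subsetP hA b bA.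
move/forall_inP: hconn => /(_ a aW)/forall_inP/(_ b bW)/connectP[s hs hl].
have [x [y [hxy px py]]] := @path_cross _ _ (onp v) _ _ hs va (ltac:(by rewrite -hl)).
have xy : x != y by apply/eqP => h; rewrite -h px in py.
have [u [ur [[hx hy]|[hx hy]]]] := edge2 (subsetP hF _ hxy) xy.
- have [vu|vu] := eqVneq v u; first by rewrite vu -hy -hx.
  move: px py; rewrite hx hy => /onpE/anc_step [h|h] /negP; first by rewrite h eqxx in vu.
  by case; apply/onpE.
- move: px py; rewrite hx hy => /onpE h; case/negP; apply/onpE.
  exact: anc_trans h (anc_par u).
Qed.

Lemma lower A p : steiner_ok e A p -> #|Cset A| <= #|p.2|.
Proof. by move=> h; rewrite -card_F0; apply: subset_leq_card; apply: F0_sub. Qed.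

Lemma W_below A x : x \in W A -> exists2 a, a \in A & anc x a.
Proof.
rewrite !inE => /orP[/orP[xA|]|].
- by exists x => //; apply: anc_refl.
- by case/andP => _ /andP[/exists_inP[a aA /onpE h] _]; exists a.
case/imsetP => v; rewrite inE => /andP[_ /andP[/exists_inP[a aA /onpE h] _]] ->.
by exists a => //; apply: anc_trans (anc_par v) h.
Qed.

Definition rel0 A := fun x y => [set x; y] \in F0 A.

Lemma climb A d x : depth x <= d -> x \in W A ->
  exists c, [/\ c \in W A, (forall a, a \in A -> anc c a) & connect (rel0 A) x c].
Proof.
elim: d x => [|d IH] x hd hx.
  exists x; split => //.
  have xr : x = r by apply: depth0; apply/eqP; rewrite -leqn0.
  by move=> a _; rewrite xr; apply: anc_r.
case: (boolP [forall a in A, onp x a]) => H.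
  exists x; split => //.
  by move=> a aA; apply/onpE; apply: (forall_inP H).
have xr : x != r.
  apply/eqP => xr; case/negP: H; apply/forall_inP => a _; rewrite xr; apply/onpE; exact: anc_r.
have xC : x \in Cset A.
  rewrite inE xr /= /cut; apply/andP; split.
    by have [a aA h] := W_below hx; apply/exists_inP; exists a => //; apply/onpE.
  by move: H; rewrite negb_forall_in.
have h1 : depth (par x) <= d by rewrite depth_par; move: hd; case: (depth x).
have h2 : par x \in W A by rewrite !inE; apply/orP; right; apply/imsetP; exists x.
have [c [cW cA cc]] := IH (par x) h1 h2.
exists c; split => //; apply: connect_trans cc; apply: connect1.
by apply/imsetP; exists x.
Qed.

Lemma common_key A c c' : c \in W A -> c' \in W A ->
  (forall a, a \in A -> anc c a) -> (forall a, a \in A -> anc c' a) ->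
  anc c' c -> c' = c.
Proof.
move=> cW c'W hc hc' h.
move: c'W; rewrite !inE => /orP[/orP[c'A|]|].
- by apply: anc_antisym h (hc _ c'A).
- case/andP=> _ /andP[_ /exists_inP[a aA /negP na]]; case: na.
  by apply/onpE; apply: hc'.
case/imsetP => v; rewrite inE => /andP[_ /andP[/exists_inP[a aA /onpE va] /exists_inP[b bA /negP vb]]] hv.
case: (anc_cmp va (hc a aA)) => [vc|cv].
  by case: vb; apply/onpE; apply: anc_trans vc (hc b bA).
have [cvv|cvv] := eqVneq c v.
  by case: vb; apply/onpE; rewrite -cvv; apply: hc.
case: (anc_step cv) => [cv'|cpv]; first by rewrite cv' eqxx in cvv.
by rewrite hv; apply: anc_antisym cpv; rewrite -hv.
Qed.

Lemma ok0 A : A != set0 -> steiner_ok e A (W A, F0 A).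
Proof.
move=> A0; have [a0 a0A] := set0Pn _ A0.
apply/and4P; split => /=.
- by apply/subsetP => x xA; rewrite !inE xA.
- apply/subsetP => _ /imsetP[v hv ->]; apply/imsetP; exists (v, par v) => //.
  by rewrite inE /=; apply: (par_spec _).1; rewrite inE in hv; case/andP: hv.
- apply/forall_inP => _ /imsetP[v hv ->]; apply/subsetP => x.
  case/set2P => ->; first by apply/setUP; left; apply/setUP; right.
  by apply/setUP; right; apply/imsetP; exists v.
apply/forall_inP => x hx; apply/forall_inP => y hy.
have [c [cW cA cc]] := climb (leqnn _) hx.
have [c' [c'W c'A cc']] := climb (leqnn _) hy.
have ec : c' = c.
  case: (anc_cmp (cA a0 a0A) (c'A a0 a0A)) => h.
    by symmetry; apply: (common_key c'W cW c'A cA h).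
  by apply: (common_key cW c'W cA c'A h).
apply: connect_trans cc _; rewrite -ec (sym_connect_sym _) //.
by move=> u w; rewrite /rel0 setUC.
Qed.

Lemma steiner_eq A : A != set0 -> steiner e A = #|Cset A|.
Proof.
move=> A0; rewrite /steiner; apply/eqP; rewrite eqn_leq; apply/andP; split.
  rewrite -card_F0; apply: (@bigmin_le _ _ _ _ _ (W A, F0 A)) => //.
    exact: mem_index_enum.
  exact: ok0.
apply: (big_ind (fun m => #|Cset A| <= m)).
- by have := max_card (mem (Cset A)); rewrite card_ord.
- by move=> x y hx hy; rewrite leq_min hx hy.
- by move=> p hp; apply: lower.
Qed.

End Tree.

Local Open Scope ring_scope.


Section Alg.
Variables (R : comNzRingType) (N k : nat) (r : 'I_N).
Hypothesis k0 : (0 < k)%N.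

Definition gS (p : 'I_N * {set 'I_k}) : {ffun 'I_k -> 'I_N} :=
  [ffun j => if j \in p.2 then p.1 else r].

Lemma Ucond_E (i : {ffun 'I_k -> 'I_N}) p : U_cond r i p = [&& p.1 != r, (0 < #|p.2| < k)%N & i == gS p].
Proof.
rewrite /U_cond; congr [&& _, _ & _].
apply/forallP/eqP => [h|->]; last by move=> j; rewrite ffunE.
by apply/ffunP => j; rewrite ffunE; apply/eqP.
Qed.

Lemma Ucond_uniq (i : {ffun 'I_k -> 'I_N}) p q : U_cond r i p -> U_cond r i q -> p = q.
Proof.
rewrite !Ucond_E => /and3P[pr /andP[p0 _] /eqP ->] /and3P[qr /andP[q0 _] /eqP E].
move: p q pr p0 qr q0 E => [w S] [w' S'] /= pr p0 qr q0 E.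
have h (x : 'I_k) : gS (w, S) x = gS (w', S') x by rewrite E.
have [j jS] : exists j, j \in S by apply/set0Pn; rewrite -card_gt0.
have := h j; rewrite !ffunE /= jS.
case: (boolP (j \in S')) => jS' hw; last by rewrite hw eqxx in pr.
subst w'; congr pair; apply/setP => x.
have := h x; rewrite !ffunE /=.
case: (x \in S); case: (x \in S') => // hx.
  by move: pr; rewrite hx eqxx.
by move: pr; rewrite -hx eqxx.
Qed.

Lemma U_sum i : U_hm R k r i = \sum_(p | U_cond r i p) (-1) ^+ (#|p.2|.-1).
Proof.
rewrite /U_hm; case: pickP => [p hp|h]; last by rewrite big_pred0.
rewrite (big_pred1 p) // => q /=; apply/idP/eqP => [hq|->] //.
exact: Ucond_uniq hq hp.
Qed.

Lemma hform_U x : hform (U_hm R k r) x =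
  \sum_(w | w != r) \sum_(S : {set 'I_k} | (0 < #|S| < k)%N)
     (-1) ^+ (#|S|.-1) * \prod_(j < k) x j (if j \in S then w else r) 0.
Proof.
rewrite /hform.
under eq_bigr => i _ do rewrite U_sum mulr_suml big_mkcond.
rewrite exchange_big /= [RHS]pair_big_dep /= [RHS]big_mkcond /=.
apply: eq_bigr => -[w S] _ /=.
case: ifP => hv.
  rewrite -big_mkcond /= (big_pred1 (gS (w, S))) /=.
    by congr (_ * _); apply: eq_bigr => j _; rewrite ffunE.
  by move=> i /=; rewrite Ucond_E /=; case/and3P: hv => -> -> ->.
by rewrite big1 // => i _; rewrite Ucond_E /= andbA hv.
Qed.

Lemma Idiag_sum i : Idiag_hm R k r i = \sum_(w | w != r) (i == [ffun => w])%:R.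
Proof.
rewrite /Idiag_hm; case: existsP => [[w /andP[wr /forallP h]]|h].
  have iw : i = [ffun => w] by apply/ffunP => j; rewrite ffunE; apply/eqP/h.
  rewrite (bigD1 w) //= iw eqxx big1 ?addr0 // => w' /andP[_ ww'].
  case: eqP => // E0.
  have := congr1 (fun f : {ffun 'I_k -> 'I_N} => f (Ordinal k0)) E0; rewrite /= !ffunE => E.
  by rewrite E eqxx in ww'.
rewrite big1 // => w' wr; case: eqP => // iw.
case: h; exists w'; rewrite wr; apply/forallP => j; by rewrite iw ffunE.
Qed.

Lemma hform_I x : hform (Idiag_hm R k r) x = \sum_(w | w != r) \prod_(j < k) x j w 0.
Proof.
rewrite /hform.
under eq_bigr => i _ do rewrite Idiag_sum mulr_suml.
rewrite exchange_big /=; apply: eq_bigr => w _.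
rewrite (bigD1 [ffun => w]) //= eqxx mul1r [X in _ + X]big1 ?addr0.
  by apply: eq_bigr => j _; rewrite ffunE.
move=> i hi; have /negbTE -> : i != [ffun => w] by move: hi; case: (i == _).
by rewrite mul0r.
Qed.

Lemma hform_sub (A B : hypermatrix R k N) (a : R) x :
  hform (hm_sub A (hm_scale a B)) x = hform A x - a * hform B x.
Proof.
rewrite /hform mulr_sumr -sumrB; apply: eq_bigr => i _.
by rewrite /hm_sub /hm_scale mulrBl mulrA.
Qed.

Lemma sgn_prod (S : {set 'I_k}) (a b : 'I_k -> R) :
  \prod_j (if j \in S then - a j else b j) =
  (-1) ^+ #|S| * \prod_j (if j \in S then a j else b j).
Proof.
have -> : (-1) ^+ #|S| = \prod_j (if j \in S then -1 else 1) :> R.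
  by rewrite -big_mkcond /= prodr_const.
rewrite -big_split /=; apply: eq_bigr => j _.
by case: (j \in S); rewrite ?mulN1r ?mul1r.
Qed.

Lemma key_id (a b : 'I_k -> R) :
  \prod_j b j - \prod_j a j - \prod_j (b j - a j) =
  \sum_(S : {set 'I_k} | (0 < #|S| < k)%N)
     (-1) ^+ (#|S|.-1) * \prod_j (if j \in S then a j else b j)
  - (if ~~ odd k then 2 * \prod_j a j else 0).
Proof.
have -> : \prod_j (b j - a j) = \prod_j (- a j + b j) by apply: eq_bigr => j _; rewrite addrC.
rewrite bigA_distr /=.
have T0 : [set: 'I_k] != set0 by apply/set0Pn; exists (Ordinal k0).
rewrite (bigD1 set0) //= (bigD1 setT) //=.
have -> : \sum_(S : {set 'I_k} | (S != set0) && (S != setT))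
    \prod_j (if j \in S then - a j else b j) =
    - \sum_(S : {set 'I_k} | (0 < #|S| < k)%N)
     (-1) ^+ (#|S|.-1) * \prod_j (if j \in S then a j else b j).
  rewrite -sumrN; apply: eq_big => S.
    rewrite card_gt0; congr (_ && _).
    rewrite eqEcard subsetT cardsT card_ord /= -ltnNge.
    by [].
  move=> /andP[S0 _]; rewrite sgn_prod.
  have : (0 < #|S|)%N by rewrite card_gt0.
  by case: #|S| => // m _; rewrite exprS mulN1r mulNr.
have -> : \prod_j (if j \in (set0 : {set 'I_k}) then - a j else b j) = \prod_j b j.
  by apply: eq_bigr => j _; rewrite in_set0.
have -> : \prod_j (if j \in [set: 'I_k] then - a j else b j) = (-1) ^+ k * \prod_j a j.
  rewrite sgn_prod cardsT card_ord; congr (_ * _).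
  by apply: eq_bigr => j _; rewrite in_setT.
rewrite -signr_odd; case: (odd k) => /=; rewrite ?expr0 ?expr1; ring.
Qed.

End Alg.

Lemma exE (T : finType) (p : pred T) : [exists x, p x] = ~~ [forall x, ~~ p x].
Proof. by rewrite negb_forall; apply: eq_existsb => x; rewrite negbK. Qed.

Lemma ex_img (N k : nat) (i : {ffun 'I_k -> 'I_N}) (p : pred 'I_N) :
  [exists a in [set i j | j : 'I_k], p a] = [exists j, p (i j)].
Proof.
apply/exists_inP/existsP => [[a /imsetP[j _ ->] h]|[j h]]; first by exists j.
by exists (i j) => //; apply/imsetP; exists j.
Qed.

Lemma prod_bool (R : comNzRingType) (k : nat) (P : pred 'I_k) (f : 'I_k -> R) :
  ([forall j, P j])%:R * \prod_j f j = \prod_j ((P j)%:R * f j).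
Proof.
rewrite big_split /=; congr (_ * _).
case: (boolP [forall j, P j]) => [/forallP h|].
  by rewrite big1 // => j _; rewrite h.
rewrite negb_forall => /existsP[j /negbTE hj].
by rewrite (bigD1 j) //= hj mul0r.
Qed.

Lemma cardC_R (R : comNzRingType) (N k : nat) (e : rel 'I_N) (r : 'I_N)
  (k0 : (0 < k)%N) (i : {ffun 'I_k -> 'I_N}) :
  (#|Cset e r [set i j | j : 'I_k]|)%:R =
  \sum_(v | v != r) (1 - ([forall j, on_path e v (i j) r])%:R
                      - ([forall j, ~~ on_path e v (i j) r])%:R) :> R.
Proof.
have -> : (#|Cset e r [set i j | j : 'I_k]|)%:R =
    \sum_(v in Cset e r [set i j | j : 'I_k]) (1 : R) by rewrite sumr_const.
rewrite (eq_bigl (fun v => (v != r) && cut e r [set i j | j : 'I_k] v)); last first.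
  by move=> v; rewrite inE.
rewrite big_mkcondr /=; apply: eq_bigr => v _.
have -> : cut e r [set i j | j : 'I_k] v =
    ~~ [forall j, ~~ on_path e v (i j) r] && ~~ [forall j, on_path e v (i j) r].
  rewrite /cut !ex_img !negb_forall; congr (_ && _).
  by apply: eq_existsb => j; rewrite negbK.
case hP: [forall j, on_path e v (i j) r]; case hQ: [forall j, ~~ on_path e v (i j) r].
- have := forallP hP (Ordinal k0); have := forallP hQ (Ordinal k0).
  by move=> /negbTE ->.
- by rewrite subr0 subrr.
- by rewrite subr0 subrr.
- by rewrite !subr0.
Qed.

Theorem mainTheorem7 (R : realFieldType) (n k : nat) (e : rel 'I_n.+1)
  (hn : (1 <= n)%N) (hk : (2 <= k)%N) (hT : is_tree e)
  (c : 'I_k -> 'cV[R]_n.+1) :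
  let Z := zeta R e ord_max in
  let M := steiner_hm R k e in
  hform M c =
  (if ~~ odd k then
     hform (hm_sub (U_hm R k ord_max) (hm_scale 2 (Idiag_hm R k ord_max)))
           (fun j => Z *m c j)
   else hform (U_hm R k ord_max) (fun j => Z *m c j)).
Proof.
move=> Z M.
have k0 : (0 < k)%N by apply: leq_trans hk.
set r : 'I_n.+1 := ord_max.
have hZ w j : (Z *m c j) w 0 = \sum_y (on_path e w y r)%:R * c j y 0.
  by rewrite mxE; apply: eq_bigr => y _; rewrite mxE.
have hZr j : (Z *m c j) r 0 = \sum_y c j y 0.
  rewrite hZ; apply: eq_bigr => y _.
  have -> : on_path e r y r by apply/(onpP r hT); exact: (anc_r r hT).
  by rewrite mul1r.
have hL : hform M c = \sum_(v | v != r)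
   (\prod_j (Z *m c j) r 0 - \prod_j (Z *m c j) v 0
    - \prod_j ((Z *m c j) r 0 - (Z *m c j) v 0)).
  rewrite /hform /M /steiner_hm.
  transitivity (\sum_(i : {ffun 'I_k -> 'I_n.+1}) \sum_(v | v != r)
     ((1 - ([forall j, on_path e v (i j) r])%:R
        - ([forall j, ~~ on_path e v (i j) r])%:R) * \prod_j c j (i j) 0)).
    apply: eq_bigr => i _.
    rewrite (steiner_eq ord_max hT); last first.
      by apply/set0Pn; exists (i (Ordinal k0)); apply/imsetP; exists (Ordinal k0).
    by rewrite (cardC_R _ _ _ k0) mulr_suml.
  rewrite exchange_big /=; apply: eq_bigr => v _.
  under eq_bigr => i _ do rewrite !mulrBl mul1r.
  rewrite !sumrB; congr (_ - _ - _).
  - rewrite (eq_bigr (fun j => \sum_y c j y 0)); last by move=> j _; rewrite hZr.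
    by rewrite bigA_distr_bigA.
  - rewrite (eq_bigr (fun j => \sum_y (on_path e v y r)%:R * c j y 0)); last first.
      by move=> j _; rewrite hZ.
    rewrite bigA_distr_bigA; apply: eq_bigr => i _; exact: prod_bool.
  - rewrite (eq_bigr (fun j => \sum_y (~~ on_path e v y r)%:R * c j y 0)); last first.
      move=> j _; rewrite hZr hZ -sumrB; apply: eq_bigr => y _.
      by case: (on_path e v y r); rewrite /= ?mul1r ?mul0r ?subr0 ?subrr.
    rewrite bigA_distr_bigA; apply: eq_bigr => i _; exact: prod_bool.
have hw w : \prod_j (Z *m c j) r 0 - \prod_j (Z *m c j) w 0
    - \prod_j ((Z *m c j) r 0 - (Z *m c j) w 0) =
    \sum_(S : {set 'I_k} | (0 < #|S| < k)%N)
     (-1) ^+ (#|S|.-1) * \prod_(j < k) (Z *m c j) (if j \in S then w else r) 0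
   - (if ~~ odd k then 2 * \prod_j (Z *m c j) w 0 else 0).
  rewrite (key_id k0 (fun j => (Z *m c j) w 0) (fun j => (Z *m c j) r 0)) /=.
  congr (_ - _); apply: eq_bigr => S _; congr (_ * _).
  by apply: eq_bigr => j _; case: (j \in S).
rewrite hL; case: ifP => hodd.
  rewrite hform_sub hform_U hform_I.
  have -> : forall (F : 'I_n.+1 -> R), 2 * (\sum_(w | w != r) F w) = \sum_(w | w != r) 2 * F w.
    by move=> F; rewrite mulr_sumr.
  rewrite -sumrB; apply: eq_bigr => w _; by rewrite hw hodd.
  exact: k0.
rewrite hform_U; apply: eq_bigr => w _; by rewrite hw hodd subr0.
Qed.
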